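(* Let $n\ge2$. For all $x,y\in\mathbb{B}^n$, $$\tfrac14\rho_{\mathbb{B}^n}(x,y)\le\tilde\tau_{\mathbb{B}^n}(x,y)\le\rho_{\mathbb{B}^n}(x,y)\quad\text{and}\quad \tilde\tau_{\mathbb{B}^n}(x,y)\le\tfrac12\rho_{\mathbb{B}^n}(x,y)+\log\tfrac54,$$ and all these inequalities are sharp: $$\inf_{x\ne y}\frac{\tilde\tau_{\mathbb{B}^n}(x,y)}{\rho_{\mathbb{B}^n}(x,y)}=\tfrac14,\qquad \sup_{x\ne y}\frac{\tilde\tau_{\mathbb{B}^n}(x,y)}{\rho_{\mathbb{B}^n}(x,y)}=1,\qquad \sup_{x,y\in\mathbb{B}^n}\Big(\tilde\tau_{\mathbb{B}^n}(x,y)-\tfrac12\rho_{\mathbb{B}^n}(x,y)\Big)=\log\tfrac54.$$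
   Context: $\mathbb{B}^n=\{z\in\mathbb{R}^n:|z|<1\}$. The hyperbolic metric $\rho_{\mathbb{B}^n}$ is given by $\sinh\frac{\rho_{\mathbb{B}^n}(x,y)}{2}=\frac{|x-y|}{\sqrt{1-|x|^2}\sqrt{1-|y|^2}}$. For a proper subdomain $D\subsetneq\mathbb{R}^n$ and $x,y\in D$, $\tilde\tau_D(x,y)=\log\big(1+\sup_{p\in\partial D}\frac{|x-y|}{\sqrt{|x-p||y-p|}}\big)$ (the scale invariant Cassinian metric). *)

(* Defs.v *)
From Stdlib Require Import Reals Lra Lia ClassicalEpsilon.
Open Scope R_scope.

(* A point of R^n is represented by its coordinate function nat -> R;
   only the coordinates 0..n-1 are relevant. *)
Fixpoint sqnorm (n : nat) (x : nat -> R) : R :=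
  match n with
  | O => 0
  | S m => sqnorm m x + x m ^ 2
  end.

Definition norm (n : nat) (x : nat -> R) : R := sqrt (sqnorm n x).

Definition edist (n : nat) (x y : nat -> R) : R := norm n (fun i => x i - y i).

Definition in_ball (n : nat) (x : nat -> R) : Prop := norm n x < 1.
Definition on_sphere (n : nat) (p : nat -> R) : Prop := norm n p = 1.

Definition rho_ball (n : nat) (x y : nat -> R) : R :=
  2 * arcsinh (edist n x y /
               (sqrt (1 - norm n x ^ 2) * sqrt (1 - norm n y ^ 2))).

Definition Rsup (E : R -> Prop) : R :=
  epsilon (inhabits 0) (fun s => is_lub E s).

Definition is_glb (E : R -> Prop) (m : R) : Prop :=
  (forall r, E r -> m <= r) /\ (forall b, (forall r, E r -> b <= r) -> b <= m).

Definition tau_tilde_ball (n : nat) (x y : nat -> R) : R :=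
  ln (1 + Rsup (fun r => exists p, on_sphere n p /\
                  r = edist n x y / sqrt (edist n x p * edist n y p))).

(* Main.v *)
Require Import Defs.
From Stdlib Require Import Reals Lra Lia Psatz ClassicalEpsilon.
Open Scope R_scope.

Fixpoint dot (n:nat) (u v : nat -> R) : R :=
  match n with O => 0 | S m => dot m u v + u m * v m end.

Lemma sqnorm_ext n f g : (forall i, f i ^ 2 = g i ^ 2) -> sqnorm n f = sqnorm n g.
Proof. intros H; induction n; cbn [sqnorm dot]; [reflexivity| rewrite IHn, H; reflexivity]. Qed.

Lemma sqnorm_nonneg n f : 0 <= sqnorm n f.
Proof. induction n; cbn [sqnorm dot]; [lra|]. pose proof (pow2_ge_0 (f n)); lra. Qed.

Lemma sqnorm_lin n a b u v :
  sqnorm n (fun i => a * u i + b * v i) =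
  a^2 * sqnorm n u + 2*a*b*dot n u v + b^2 * sqnorm n v.
Proof. induction n; cbn [sqnorm dot]; [ring|]. rewrite IHn. ring. Qed.

Lemma sqnorm_scale n c u : sqnorm n (fun i => c * u i) = c^2 * sqnorm n u.
Proof. induction n; cbn [sqnorm dot]; [ring|]. rewrite IHn. ring. Qed.

Lemma cauchy_schwarz n u v : (dot n u v)^2 <= sqnorm n u * sqnorm n v.
Proof.
  set (su := sqnorm n u). set (sv := sqnorm n v). set (D := dot n u v).
  assert (H : forall l, 0 <= su - 2*l*D + l^2*sv).
  { intro l. pose proof (sqnorm_nonneg n (fun i => 1 * u i + (-l) * v i)) as H.
    rewrite sqnorm_lin in H. unfold su, sv, D. lra. }
  assert (Hsu : 0 <= su) by apply sqnorm_nonneg.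
  assert (Hsv : 0 <= sv) by apply sqnorm_nonneg.
  destruct (Rle_lt_or_eq_dec 0 sv Hsv) as [Hp|H0].
  - specialize (H (D/sv)).
    assert (E : sv * (su - 2 * (D/sv) * D + (D/sv)^2 * sv) = su*sv - D^2) by (field; lra).
    assert (0 <= sv * (su - 2 * (D/sv) * D + (D/sv)^2 * sv)) by (apply Rmult_le_pos; lra).
    lra.
  - rewrite <- H0 in H |- *.
    destruct (Req_dec D 0) as [HD|HD].
    + rewrite HD. lra.
    + specialize (H ((su+1)/(2*D))).
      assert (E: su - 2 * ((su + 1) / (2 * D)) * D + ((su + 1) / (2 * D)) ^ 2 * 0 = -1) by (field; lra).
      lra.
Qed.

Lemma le_from_sq x y : 0 <= y -> x^2 <= y^2 -> x <= y.
Proof. intros. nra. Qed.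

Lemma sqrt_le_l a b : 0 <= b -> a <= b^2 -> sqrt a <= b.
Proof. intros Hb H. rewrite <- (sqrt_pow2 b Hb). apply sqrt_le_1_alt; lra. Qed.

Lemma sqrt_ge_r a b : 0 <= b -> b^2 <= a -> b <= sqrt a.
Proof. intros Hb H. rewrite <- (sqrt_pow2 b Hb). apply sqrt_le_1_alt; lra. Qed.

Lemma norm_tri n u v : norm n (fun i => u i + v i) <= norm n u + norm n v.
Proof.
  unfold norm.
  pose proof (sqrt_pos (sqnorm n u)). pose proof (sqrt_pos (sqnorm n v)).
  apply sqrt_le_l; [lra|].
  rewrite (sqnorm_ext n (fun i => u i + v i) (fun i => 1 * u i + 1 * v i))
    by (intros; ring).
  rewrite sqnorm_lin.
  pose proof (cauchy_schwarz n u v).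
  pose proof (pow2_sqrt _ (sqnorm_nonneg n u)).
  pose proof (pow2_sqrt _ (sqnorm_nonneg n v)).
  set (a := sqrt (sqnorm n u)) in *. set (b := sqrt (sqnorm n v)) in *.
  assert (dot n u v <= a * b).
  { apply le_from_sq. apply Rmult_le_pos; lra. rewrite Rpow_mult_distr. nra. }
  nra.
Qed.

Lemma edist_tri n x y z : edist n x z <= edist n x y + edist n y z.
Proof.
  unfold edist. rewrite <- (norm_tri n (fun i => x i - y i) (fun i => y i - z i)).
  unfold norm. rewrite (sqnorm_ext n (fun i => x i - z i) (fun i => x i - y i + (y i - z i)))
   by (intros; ring). lra.
Qed.

Lemma edist_sym n x y : edist n x y = edist n y x.
Proof. unfold edist, norm. f_equal. apply sqnorm_ext. intros; ring. Qed.

Lemma norm_edist0 n x : norm n x = edist n x (fun _ => 0).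
Proof. unfold edist, norm. f_equal. apply sqnorm_ext. intros; ring. Qed.

Lemma norm_nonneg n x : 0 <= norm n x.
Proof. apply sqrt_pos. Qed.

Lemma edist_nonneg n x y : 0 <= edist n x y.
Proof. apply sqrt_pos. Qed.

Lemma norm_sq n x : norm n x ^ 2 = sqnorm n x.
Proof. apply pow2_sqrt, sqnorm_nonneg. Qed.

Lemma sphere_dist n x p : on_sphere n p -> 1 - norm n x <= edist n x p.
Proof.
  intro Hp. unfold on_sphere in Hp.
  pose proof (edist_tri n p x (fun _ => 0)).
  rewrite <- !norm_edist0, Hp, edist_sym in H. lra.
Qed.

Definition ve (c : R) : nat -> R := fun i => if Nat.eqb i 0 then c else 0.

Lemma sqnorm_S m f : sqnorm (S m) f = sqnorm m f + f m ^ 2.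
Proof. reflexivity. Qed.

Lemma sqnorm_ve m c : sqnorm (S m) (ve c) = c^2.
Proof. induction m. unfold ve; simpl; ring. rewrite sqnorm_S, IHm; unfold ve; simpl; ring. Qed.

Lemma sqnorm_ve_sub m t p :
  sqnorm (S m) (fun i => ve t i - p i) = t^2 - 2*t*p 0%nat + sqnorm (S m) p.
Proof. induction m. unfold ve; simpl; ring.
  rewrite !(sqnorm_S (S m)), IHm; unfold ve; simpl; ring. Qed.

Lemma p0_le m p : p 0%nat ^ 2 <= sqnorm (S m) p.
Proof. induction m. simpl; lra. rewrite sqnorm_S.
  pose proof (pow2_ge_0 (p (S m))). lra. Qed.

Lemma sphere_sq n p : on_sphere n p -> sqnorm n p = 1.
Proof. unfold on_sphere. intro H. rewrite <- norm_sq, H. ring. Qed.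

Section S1.
Variable n : nat.
Hypothesis hn : (1 <= n)%nat.

Lemma norm_ve c : 0 <= c -> norm n (ve c) = c.
Proof. intros. destruct n as [|m]; [lia|]. unfold norm; rewrite sqnorm_ve. apply sqrt_pow2; auto. Qed.

Lemma norm_ve_opp c : 0 <= c -> norm n (ve (-c)) = c.
Proof. intros. destruct n as [|m]; [lia|]. unfold norm; rewrite sqnorm_ve.
  replace ((-c)^2) with (c^2) by ring. apply sqrt_pow2; auto. Qed.

Lemma edist_ve t s : s <= t -> edist n (ve t) (ve s) = t - s.
Proof. intros. unfold edist. rewrite <- norm_ve by lra. unfold norm. f_equal.
  apply sqnorm_ext. intro i. unfold ve. destruct (Nat.eqb i 0); ring. Qed.

Lemma edist_ve_sph t p : on_sphere n p ->
  edist n (ve t) p = sqrt (t^2 - 2*t*p 0%nat + 1).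
Proof. intros Hp. apply sphere_sq in Hp. unfold edist, norm.
  destruct n as [|m]; [lia|]. rewrite sqnorm_ve_sub, Hp. reflexivity. Qed.

Lemma sphere_ve1 : on_sphere n (ve 1).
Proof. unfold on_sphere. apply norm_ve. lra. Qed.

Lemma p0_le_1 p : on_sphere n p -> p 0%nat ^ 2 <= 1.
Proof. intros Hp. apply sphere_sq in Hp. destruct n as [|m]; [lia|].
  rewrite <- Hp. apply p0_le. Qed.
End S1.

Definition Aval n x y := edist n x y / (sqrt (1 - norm n x ^ 2) * sqrt (1 - norm n y ^ 2)).
Definition Sset n x y := fun r => exists p, on_sphere n p /\
                  r = edist n x y / sqrt (edist n x p * edist n y p).
Definition Sval n x y := Rsup (Sset n x y).

Lemma tau_eq n x y : tau_tilde_ball n x y = ln (1 + Sval n x y).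
Proof. reflexivity. Qed.
Lemma rho_eq n x y : rho_ball n x y = 2 * ln (Aval n x y + sqrt (Aval n x y ^ 2 + 1)).
Proof. reflexivity. Qed.

Lemma inv_nonneg x : 0 <= x -> 0 <= / x.
Proof. intros [H|H]. left; apply Rinv_0_lt_compat; auto. subst; rewrite Rinv_0; lra. Qed.

Lemma div_nonneg a b : 0 <= a -> 0 <= b -> 0 <= a / b.
Proof. intros; unfold Rdiv; apply Rmult_le_pos; auto; apply inv_nonneg; auto. Qed.

Lemma div_le_den a X Y : 0 <= a -> 0 < Y -> Y <= X -> a / X <= a / Y.
Proof. intros. unfold Rdiv. apply Rmult_le_compat_l; auto. apply Rinv_le_contravar; auto. Qed.

Lemma Aval_nonneg n x y : 0 <= Aval n x y.
Proof. apply div_nonneg. apply edist_nonneg. apply Rmult_le_pos; apply sqrt_pos. Qed.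

Lemma elt_le n x y p : in_ball n x -> in_ball n y -> on_sphere n p ->
  edist n x y / sqrt (edist n x p * edist n y p) <= 2 * Aval n x y.
Proof.
  intros Hx Hy Hp. unfold in_ball in *. unfold Aval.
  pose proof (sphere_dist n x p Hp). pose proof (sphere_dist n y p Hp).
  pose proof (norm_nonneg n x). pose proof (norm_nonneg n y).
  set (a := norm n x) in *. set (b := norm n y) in *.
  set (u := edist n x p) in *. set (v := edist n y p) in *.
  set (d := edist n x y).
  assert (Hd : 0 <= d) by apply edist_nonneg.
  assert (Ha2 : 0 < 1 - a^2) by nra. assert (Hb2 : 0 < 1 - b^2) by nra.
  set (Y := sqrt (1 - a^2) * sqrt (1 - b^2)).
  assert (HY : 0 < Y) by (apply Rmult_lt_0_compat; apply sqrt_lt_R0; lra).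
  assert (HX : 0 < sqrt (u*v)) by (apply sqrt_lt_R0; nra).
  assert (HYX : Y <= 2 * sqrt (u*v)).
  { apply le_from_sq. lra. unfold Y. rewrite Rpow_mult_distr, !pow2_sqrt by nra.
    rewrite Rpow_mult_distr, pow2_sqrt by nra.
    assert ((1-a)*(1-b) <= u*v) by (apply Rmult_le_compat; lra).
    assert ((1-a^2)*(1-b^2) = ((1-a)*(1-b)) * ((1+a)*(1+b))) by ring.
    assert ((1+a)*(1+b) <= 4) by nra.
    assert (0 <= (1-a)*(1-b)) by nra. nra. }
  replace (2 * (d / Y)) with (d / (Y / 2)) by (field; lra).
  apply div_le_den; lra.
Qed.

Lemma Sval_lub n x y : (1 <= n)%nat -> in_ball n x -> in_ball n y ->
  is_lub (Sset n x y) (Sval n x y).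
Proof.
  intros hn Hx Hy. unfold Sval, Rsup. apply epsilon_spec.
  destruct (completeness (Sset n x y)) as [m Hm].
  - exists (2 * Aval n x y). intros r [p [Hp ->]]. apply elt_le; auto.
  - exists (edist n x y / sqrt (edist n x (ve 1) * edist n y (ve 1))).
    exists (ve 1). split; auto. apply sphere_ve1; auto.
  - exists m; exact Hm.
Qed.

Lemma Sval_ge n x y p : (1 <= n)%nat -> in_ball n x -> in_ball n y -> on_sphere n p ->
  edist n x y / sqrt (edist n x p * edist n y p) <= Sval n x y.
Proof. intros. destruct (Sval_lub n x y) as [Hu _]; auto. apply Hu. exists p; auto. Qed.

Lemma Sval_le n x y c : (1 <= n)%nat -> in_ball n x -> in_ball n y ->
  (forall p, on_sphere n p -> edist n x y / sqrt (edist n x p * edist n y p) <= c) ->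
  Sval n x y <= c.
Proof. intros. destruct (Sval_lub n x y) as [_ Hu]; auto. apply Hu.
  intros r [p [Hp ->]]. auto. Qed.

Lemma Sval_nonneg n x y : (1 <= n)%nat -> in_ball n x -> in_ball n y -> 0 <= Sval n x y.
Proof. intros. eapply Rle_trans; [|apply (Sval_ge n x y (ve 1)); auto; apply sphere_ve1; auto].
  apply div_nonneg; [apply edist_nonneg| apply sqrt_pos]. Qed.

Lemma Sval_le2A n x y : (1 <= n)%nat -> in_ball n x -> in_ball n y -> Sval n x y <= 2 * Aval n x y.
Proof. intros. apply Sval_le; auto. intros; apply elt_le; auto. Qed.

Definition Ef A := A + sqrt (A^2 + 1).

Lemma ln_le' x y : 0 < x -> x <= y -> ln x <= ln y.
Proof. intros H [H1|H1]. left; apply ln_increasing; auto. subst; lra. Qed.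

Lemma ln_le_sub1 y : 0 < y -> ln y <= y - 1.
Proof. intros. pose proof (exp_ineq1_le (ln y)). rewrite exp_ln in H0; auto. lra. Qed.

Lemma sqrt_ge_A A : 0 <= A -> A <= sqrt (A^2+1).
Proof. intros. apply sqrt_ge_r; lra. Qed.

Lemma Ef_ge1 A : 0 <= A -> 1 <= Ef A.
Proof. intros. unfold Ef. assert (1 <= sqrt (A^2+1)) by (apply sqrt_ge_r; nra). lra. Qed.

Lemma upper_ineqs A S : 0 <= A -> 0 <= S -> S <= 2 * A ->
  ln (1 + S) <= 2 * ln (Ef A) /\ ln (1 + S) <= ln (Ef A) + ln (5/4).
Proof.
  intros HA HS HSA. pose proof (Ef_ge1 A HA).
  pose proof (sqrt_ge_A A HA).
  assert (Hr2 : sqrt (A^2+1)^2 = A^2+1) by (apply pow2_sqrt; nra). unfold Ef in *.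
  set (r := sqrt (A^2+1)) in *.
  split.
  - replace (2 * ln (A + r)) with (ln ((A+r)*(A+r))) by (rewrite ln_mult; lra).
    apply ln_le'. lra. assert (1 <= r) by nra. nra.
  - rewrite <- ln_mult by lra. apply ln_le'. lra.
    assert (4 + 3 * A <= 5 * r) by (apply le_from_sq; [lra| pose proof (pow2_ge_0 (4*A-3)); nra]). lra.
Qed.

Lemma lower_geom n x y : (1 <= n)%nat -> in_ball n x -> in_ball n y ->
  norm n y <= norm n x -> 0 < edist n x y ->
  Ef (Aval n x y) <= (1 + Sval n x y)^2.
Proof.
  intros hn Hx Hy Hyx Hd. unfold in_ball in *.
  set (a := norm n x) in *. set (b := norm n y) in *. set (d := edist n x y) in *.
  assert (Hb0 : 0 <= b) by apply norm_nonneg.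
  assert (Hda : d <= a + b).
  { unfold d, a, b. rewrite !norm_edist0, (edist_sym n y). apply edist_tri. }
  assert (Ha : 0 < a) by lra.
  set (p := fun i => / a * x i).
  assert (Hp : on_sphere n p).
  { unfold on_sphere, norm, p. rewrite sqnorm_scale, <- norm_sq. fold a.
    replace ((/a)^2 * a^2) with 1 by (field; lra). apply sqrt_1. }
  set (u := edist n x p).
  assert (Hu : u = 1 - a).
  { unfold u, edist, norm. rewrite (sqnorm_ext n _ (fun i => (1 - /a) * x i)) by (intros; unfold p; ring).
    rewrite sqnorm_scale, <- norm_sq. fold a.
    replace ((1 - / a) ^ 2 * a ^ 2) with ((1-a)^2) by (field; lra). apply sqrt_pow2; lra. }
  set (v := edist n y p).
  assert (Hv : v <= d + u).
  { unfold v, d, u. rewrite (edist_sym n x y). apply edist_tri. }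
  assert (Hv0 : 1 - b <= v) by (apply sphere_dist; auto).
  assert (HS := Sval_ge n x y p hn Hx Hy Hp). fold d u v in HS.
  assert (Hu0 : 0 < u) by lra.
  set (w := sqrt (u * (d + u))).
  assert (Hw2 : w^2 = u*(d+u)) by (apply pow2_sqrt; nra).
  assert (Hw : u <= w) by (apply sqrt_ge_r; nra).
  assert (Hwv : sqrt (u*v) <= w) by (apply sqrt_le_1_alt; nra).
  assert (Huv : 0 < sqrt (u*v)) by (apply sqrt_lt_R0; nra).
  assert (Hs1 : d / w <= d / sqrt (u*v)) by (apply div_le_den; lra).
  set (A := Aval n x y).
  assert (HA0 : 0 <= A) by apply Aval_nonneg.
  assert (HAu : A * (u * (2 - u)) <= d).
  { unfold A, Aval. fold a b d.
    assert (Hs : sqrt (1 - a^2) <= sqrt (1 - b^2)) by (apply sqrt_le_1_alt; nra).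
    assert (Hq : 0 < sqrt (1 - a^2)) by (apply sqrt_lt_R0; nra).
    assert (Hq2 : sqrt (1-a^2)^2 = 1 - a^2) by (apply pow2_sqrt; nra).
    replace (u * (2-u)) with (1 - a^2) by (rewrite Hu; ring).
    set (Y := sqrt (1 - a ^ 2) * sqrt (1 - b ^ 2)).
    assert (1 - a^2 <= Y) by (unfold Y; nra).
    unfold Rdiv. rewrite Rmult_assoc. rewrite <- (Rmult_1_r d) at 2.
    apply Rmult_le_compat_l; [lra|].
    assert (HY0: 0 < Y) by nra.
    apply Rle_trans with (/Y * Y); [apply Rmult_le_compat_l; [left; apply Rinv_0_lt_compat; lra| lra] | right; field; lra]. }
  set (K := (u + d)/u).
  assert (HK : K * u = u + d) by (unfold K; field; lra).
  assert (HK1 : 1 <= K) by nra.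
  assert (H2AK : 2 * A * K <= K^2 - 1).
  { apply (Rmult_le_reg_r (u^2 * (2-u))). nra.
    assert (E1 : 2 * A * K * (u^2 * (2-u)) = 2 * (A * (u*(2-u))) * (K*u)) by ring.
    assert (E2 : (K^2 - 1) * (u^2 * (2-u)) = ((K*u)^2 - u^2) * (2-u)) by ring.
    rewrite E1, E2, HK.
    assert (0 <= u*(2-u)) by nra.
    assert (2 * (A * (u * (2 - u))) * (u + d) <= 2 * d * (u+d)) by nra.
    assert (0 <= d*u*(2-2*u-d)) by (apply Rmult_le_pos; [apply Rmult_le_pos|]; lra).
    assert (((u+d)^2 - u^2) * (2-u) - 2*d*(u+d) = d*u*(2-2*u-d)) by ring.
    lra. }
  assert (HEK : Ef A <= K).
  { unfold Ef. assert (A < K) by nra.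
    assert (sqrt (A^2+1) <= K - A) by (apply sqrt_le_l; nra). lra. }
  assert (HK2 : K <= (1 + d/w)^2).
  { assert (Hw0 : 0 < w) by lra.
    assert (E3 : K = ((u+d)/w)^2).
    { unfold Rdiv. rewrite Rpow_mult_distr, pow_inv, Hw2. unfold K. field. lra. }
    rewrite E3. replace (1 + d/w) with ((w+d)/w) by (field; lra).
    apply pow_incr. split. apply div_nonneg; lra.
    unfold Rdiv. apply Rmult_le_compat_r. apply inv_nonneg; lra. lra. }
  assert (0 <= d / w) by (apply div_nonneg; lra).
  assert ((1 + d/w)^2 <= (1 + Sval n x y)^2) by (apply pow_incr; lra).
  lra.
Qed.

Lemma lt_div M t r : 0 < r -> M * r < t -> M < t / r.
Proof. intros. apply Rmult_lt_reg_r with r; auto. unfold Rdiv. rewrite Rmult_assoc, Rinv_l; lra. Qed.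

Lemma div_lt M t r : 0 < r -> t < M * r -> t / r < M.
Proof. intros. apply Rmult_lt_reg_r with r; auto. unfold Rdiv. rewrite Rmult_assoc, Rinv_l; lra. Qed.

Section Rad.
Variable n : nat.
Hypothesis hn : (1 <= n)%nat.

Lemma radial a q : 0 < a -> 1 < q -> a * q^2 < 1 ->
  let x := ve (1 - a) in let y := ve (1 - a*q^2) in
  in_ball n x /\ in_ball n y /\ edist n x y = a*q^2 - a /\
  (q^2 - 1)/q <= Sval n x y /\
  0 < Aval n x y /\ Aval n x y <= ((q^2-1)/q) / (2 - a*q^2).
Proof.
  intros Ha Hq Hb x y. set (b := a*q^2) in *.
  assert (Hbdef : b = a*q^2) by reflexivity. clearbody b.
  assert (Hq2 : 1 < q^2) by nra.
  assert (Hab : a < b) by (rewrite Hbdef; nra).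
  assert (Nx : norm n x = 1 - a) by (apply norm_ve; auto; lra).
  assert (Ny : norm n y = 1 - b) by (apply norm_ve; auto; lra).
  assert (Bx : in_ball n x) by (unfold in_ball; lra).
  assert (By : in_ball n y) by (unfold in_ball; lra).
  assert (Dxy : edist n x y = b - a) by (unfold x, y; rewrite (edist_ve n hn) by lra; ring).
  split; [auto| split; [auto| split; [auto|split]]].
  - pose proof (Sval_ge n x y (ve 1) hn Bx By (sphere_ve1 n hn)).
    rewrite (edist_sym n x (ve 1)), (edist_sym n y (ve 1)) in H. unfold x, y in H.
    rewrite !(edist_ve n hn) in H by lra. fold x y in H. replace ((1 - a) - (1 - b)) with (b - a) in H by ring.
    replace ((1 - (1 - a)) * (1 - (1 - b))) with ((a*q)^2) in H by (rewrite Hbdef; ring).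
    rewrite sqrt_pow2 in H by nra.
    replace ((b - a) / (a * q)) with ((q ^ 2 - 1) / q) in H by (rewrite Hbdef; field; lra). auto.
  - unfold Aval. rewrite Nx, Ny, Dxy.
    assert (0 < 1 - (1-a)^2) by nra. assert (0 < 1 - (1-b)^2) by nra.
    set (D := sqrt (1 - (1 - a) ^ 2) * sqrt (1 - (1 - b) ^ 2)).
    assert (HD : 0 < D) by (unfold D; apply Rmult_lt_0_compat; apply sqrt_lt_R0; lra).
    split. unfold Rdiv; apply Rmult_lt_0_compat; [lra| apply Rinv_0_lt_compat; lra].
    assert (HD2 : a * q * (2 - b) <= D).
    { apply le_from_sq. lra.
      assert (HD2 : D^2 = (a*q)^2 * ((2-a)*(2-b))) by
        (unfold D; rewrite Rpow_mult_distr, !pow2_sqrt by lra; rewrite Hbdef; ring).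
      rewrite HD2, !Rpow_mult_distr. assert ((2-b)^2 <= (2-a)*(2-b)) by nra.
      assert (0 <= a^2 * q^2) by nra. nra. }
    replace ((q ^ 2 - 1) / q / (2 - b)) with ((b - a) / (a*q*(2-b))) by (rewrite Hbdef; field; repeat split; lra).
    apply div_le_den; [lra| |auto]. apply Rmult_lt_0_compat; [nra|lra].
Qed.

Lemma Sval_sym_le x y : in_ball n x -> in_ball n y -> Sval n y x <= Sval n x y.
Proof. intros. apply Sval_le; auto. intros p Hp.
  rewrite (edist_sym n y x), Rmult_comm. apply Sval_ge; auto. Qed.

Lemma Sval_sym x y : in_ball n x -> in_ball n y -> Sval n y x = Sval n x y.
Proof. intros. apply Rle_antisym; apply Sval_sym_le; auto. Qed.

Lemma Aval_sym x y : Aval n y x = Aval n x y.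
Proof. unfold Aval. rewrite edist_sym, Rmult_comm. reflexivity. Qed.

Lemma Aval_pos x y : in_ball n x -> in_ball n y -> 0 < edist n x y -> 0 < Aval n x y.
Proof. intros Hx Hy Hd. unfold in_ball in *. unfold Aval.
  pose proof (norm_nonneg n x). pose proof (norm_nonneg n y).
  unfold Rdiv; apply Rmult_lt_0_compat; [lra| apply Rinv_0_lt_compat].
  apply Rmult_lt_0_compat; apply sqrt_lt_R0; nra. Qed.

Lemma Ef_gt1 A : 0 < A -> 1 < Ef A.
Proof. intros. pose proof (Ef_ge1 A). unfold Ef in *. assert (1 <= sqrt (A^2+1)) by (apply sqrt_ge_r; nra). lra. Qed.

Lemma rho_pos x y : in_ball n x -> in_ball n y -> 0 < edist n x y -> 0 < rho_ball n x y.
Proof. intros. rewrite rho_eq. fold (Ef (Aval n x y)).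
  assert (1 < Ef (Aval n x y)) by (apply Ef_gt1, Aval_pos; auto).
  assert (0 < ln (Ef (Aval n x y))) by (rewrite <- ln_1; apply ln_increasing; lra). lra. Qed.

Lemma ln_ge_frac s : 0 <= s -> s / (1+s) <= ln (1+s).
Proof. intros. pose proof (ln_le_sub1 (/(1+s))). rewrite ln_Rinv in H0 by lra.
  assert (0 < /(1+s)) by (apply Rinv_0_lt_compat; lra).
  specialize (H0 H1). replace (s/(1+s)) with (1 - /(1+s)) by (field; lra). lra. Qed.

Lemma ln_Ef_le A : 0 <= A -> ln (Ef A) <= A + A^2/2.
Proof. intros. pose proof (Ef_ge1 A H). pose proof (ln_le_sub1 (Ef A)).
  unfold Ef in *. assert (sqrt (A^2+1) <= 1 + A^2/2) by (apply sqrt_le_l; nra). 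
  assert (ln (A + sqrt (A ^ 2 + 1)) <= A + sqrt (A ^ 2 + 1) - 1) by (apply H1; lra). lra. Qed.
End Rad.

Section Fam.
Variable n : nat.
Hypothesis hn : (1 <= n)%nat.

Lemma fam_inf b : / 4 < b -> exists x y, in_ball n x /\ in_ball n y /\ edist n x y <> 0 /\
   tau_tilde_ball n x y / rho_ball n x y < b.
Proof.
  intros Hb.
  assert (Hl9 : 0 < ln 9) by (rewrite <- ln_1; apply ln_increasing; lra).
  set (L := ln 9 / (4*b-1) + 1).
  assert (HL : 1 <= L) by (unfold L; assert (0 <= ln 9 / (4*b-1)) by (apply div_nonneg; lra); lra).
  assert (HLk : ln 9 < (4*b-1) * L) by (unfold L; field_simplify; lra).
  set (w := exp (-L)).
  assert (Hw0 : 0 < w) by apply exp_pos.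
  assert (HlnW : ln w = - L) by apply ln_exp.
  assert (He1 : 2 < exp 1) by (pose proof (exp_ineq1 1); lra).
  assert (Hw1 : w <= /2).
  { unfold w. apply Rle_trans with (exp (- (1))).
    destruct (Rle_lt_or_eq_dec 1 L HL). left; apply exp_increasing; lra. rewrite <- e; right; reflexivity.
    rewrite exp_Ropp. left. apply Rinv_lt_contravar; lra. }
  set (t := 1 - w).
  assert (Ht0 : 0 <= t) by (unfold t; lra).
  exists (ve t), (ve (-t)).
  assert (Nx : norm n (ve t) = t) by (apply norm_ve; auto).
  assert (Ny : norm n (ve (-t)) = t) by (apply norm_ve_opp; auto).
  assert (Bx : in_ball n (ve t)) by (unfold in_ball; unfold t in *; lra).
  assert (By : in_ball n (ve (-t))) by (unfold in_ball; unfold t in *; lra).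
  assert (D : edist n (ve t) (ve (-t)) = 2 * t) by (rewrite (edist_ve n hn) by lra; ring).
  assert (Hd : 0 < edist n (ve t) (ve (-t))) by (rewrite D; unfold t; lra).
  split; [auto| split; [auto| split; [lra|]]].
  assert (Htw : 1 - t^2 = w * (2 - w)) by (unfold t; ring).
  assert (Hsw : sqrt w <= sqrt (1 - t^2)) by (apply sqrt_le_1_alt; nra).
  assert (Hsw0 : 0 < sqrt w) by (apply sqrt_lt_R0; lra).
  assert (Hsw1 : sqrt w <= 1) by (rewrite <- sqrt_1; apply sqrt_le_1_alt; lra).
  assert (HS : Sval n (ve t) (ve (-t)) <= 2 * t / sqrt (1 - t^2)).
  { apply Sval_le; auto. intros p Hp. rewrite D.
    rewrite !(edist_ve_sph n hn) by auto.
    pose proof (p0_le_1 n hn p Hp). set (c := p 0%nat) in *.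
    assert (0 <= t^2 - 2*t*c + 1) by nra. assert (0 <= (-t)^2 - 2*(-t)*c + 1) by nra.
    rewrite <- sqrt_mult_alt by auto.
    apply div_le_den. lra. apply sqrt_lt_R0; nra.
    apply sqrt_le_1_alt. apply sqrt_ge_r. nra.
    assert ((t ^ 2 - 2 * t * c + 1) * ((- t) ^ 2 - 2 * (- t) * c + 1) = (t^2+1)^2 - 4*t^2*c^2) by ring.
    nra. }
  set (S := Sval n (ve t) (ve (-t))) in *.
  assert (HS0 : 0 <= S) by (apply Sval_nonneg; auto).
  assert (HS2 : S <= 2 / sqrt w).
  { apply Rle_trans with (2 * t / sqrt (1 - t ^ 2)); auto.
    apply Rle_trans with (2 / sqrt (1 - t^2)).
    unfold Rdiv; apply Rmult_le_compat_r. apply inv_nonneg, sqrt_pos. unfold t; lra.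
    apply div_le_den; lra. }
  assert (HS3 : (1 + S)^2 <= 9 / w).
  { assert (1 + S <= 3 / sqrt w).
    { assert (1 <= 1 / sqrt w).
      { unfold Rdiv. rewrite Rmult_1_l. rewrite <- Rinv_1 at 1. apply Rinv_le_contravar; lra. }
      replace (3 / sqrt w) with (1 / sqrt w + 2 / sqrt w) by (field; lra). lra. }
    replace (9 / w) with ((3 / sqrt w)^2).
    apply pow_incr; lra.
    unfold Rdiv. rewrite Rpow_mult_distr, pow_inv, pow2_sqrt by lra. field. lra. }
  assert (Htau : 2 * tau_tilde_ball n (ve t) (ve (-t)) <= ln 9 + L).
  { rewrite tau_eq. fold S.
    replace (2 * ln (1 + S)) with (ln ((1+S)^2)) by (rewrite ln_pow by lra; simpl; ring).
    apply Rle_trans with (ln (9 / w)). apply ln_le'. nra. auto.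
    unfold Rdiv. rewrite ln_mult, ln_Rinv by (try apply Rinv_0_lt_compat; lra). lra. }
  assert (Hrho : 2 * L <= rho_ball n (ve t) (ve (-t))).
  { rewrite rho_eq. fold (Ef (Aval n (ve t) (ve (-t)))).
    assert (HA : Aval n (ve t) (ve (-t)) = 2 * t / (1 - t^2)).
    { unfold Aval. rewrite Nx, Ny, D. rewrite sqrt_sqrt by nra. reflexivity. }
    set (A := Aval n (ve t) (ve (-t))) in *.
    assert (HA0 : 0 <= A) by (rewrite HA; apply div_nonneg; nra).
    assert (2 * A <= Ef A) by (unfold Ef; pose proof (sqrt_ge_A A HA0); lra).
    assert (/ w <= 2 * A).
    { rewrite HA, Htw.
      replace (2 * (2*t/(w*(2-w)))) with (/w * (4*t/(2-w))) by (field; lra).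
      rewrite <- (Rmult_1_r (/w)) at 1. apply Rmult_le_compat_l. left; apply Rinv_0_lt_compat; lra.
      replace (4*t/(2-w)) with (1 + (4*t - (2-w))/(2-w)) by (field; lra).
      assert (0 <= (4*t - (2-w))/(2-w)) by (apply div_nonneg; unfold t; lra). lra. }
    assert (ln (/ w) <= ln (Ef A)) by (apply ln_le'; [apply Rinv_0_lt_compat|]; lra).
    rewrite ln_Rinv in H1 by lra. lra. }
  apply div_lt. lra. nra.
Qed.

Lemma fam_ratio M : M < 1 -> exists x y, in_ball n x /\ in_ball n y /\ edist n x y <> 0 /\
   M < tau_tilde_ball n x y / rho_ball n x y.
Proof.
  intros HM. set (M' := Rmax M 0).
  assert (HM1 : M <= M') by apply Rmax_l. assert (HM2 : 0 <= M') by apply Rmax_r.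
  assert (HM3 : M' < 1) by (unfold M'; apply Rmax_lub_lt; lra).
  set (h := Rmin (1/8) ((1-M')/20)).
  assert (Hh0 : 0 < h) by (unfold h; apply Rmin_pos; lra).
  assert (Hh1 : h <= 1/8) by apply Rmin_l. assert (Hh2 : h <= (1-M')/20) by apply Rmin_r.
  assert (Hb1 : h * (1+h)^2 < 1) by nra.
  destruct (radial n hn h (1+h) Hh0 ltac:(lra) Hb1) as [Bx [By [Dxy [HS [HA0 HA]]]]].
  set (x := ve (1-h)) in *. set (y := ve (1 - h*(1+h)^2)) in *.
  exists x, y. assert (Hd : 0 < edist n x y) by (rewrite Dxy; nra).
  split; [auto| split; [auto| split; [lra|]]].
  set (b := h * (1+h)^2) in *. set (sg := ((1 + h) ^ 2 - 1) / (1 + h)) in *.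
  assert (Hsg : sg = h * (2+h) / (1+h)) by (unfold sg; field; lra).
  assert (Hsg0 : 0 < sg) by (rewrite Hsg; apply Rdiv_lt_0_compat; nra).
  assert (Hsg3 : sg <= 3*h).
  { rewrite Hsg. apply Rmult_le_reg_r with (1+h); [lra|]. unfold Rdiv.
    rewrite Rmult_assoc, Rinv_l by lra. nra. }
  assert (Hb2 : b <= 2*h) by (unfold b; nra).
  set (c := sg / (2 - b)) in *.
  assert (Hc0 : 0 < c) by (unfold c; apply Rdiv_lt_0_compat; lra).
  assert (Hc2 : c <= 2*h).
  { unfold c. apply Rmult_le_reg_r with (2-b); [lra|]. unfold Rdiv.
    rewrite Rmult_assoc, Rinv_l by lra. nra. }
  set (A := Aval n x y) in *.
  assert (Hrho : rho_ball n x y <= 2*c + c^2).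
  { rewrite rho_eq. fold A. fold (Ef A). pose proof (ln_Ef_le A ltac:(lra)). nra. }
  assert (Hrho0 : 0 < rho_ball n x y) by (apply rho_pos; auto).
  set (S := Sval n x y) in *.
  assert (Htau : sg / (1+sg) <= tau_tilde_ball n x y).
  { rewrite tau_eq. fold S. apply Rle_trans with (ln (1+sg)).
    apply ln_ge_frac; lra. apply ln_le'; lra. }
  apply lt_div; auto.
  assert (Hkey : M' * ((2 + c) * (1 + sg)) < 2 - b).
  { assert ((2+c)*(1+sg) <= 2 + 9*h) by nra. nra. }
  assert (M' * (2*c + c^2) < sg / (1+sg)).
  { replace (sg / (1+sg)) with (c * ((2-b)/(1+sg))) by (unfold c; field; lra).
    replace (M' * (2*c + c^2)) with (c * (M' * (2+c))) by ring.
    apply Rmult_lt_compat_l; auto. apply lt_div; lra. }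
  nra.
Qed.

Lemma fam_diff M : M < ln (5/4) -> exists x y, in_ball n x /\ in_ball n y /\
   M < tau_tilde_ball n x y - / 2 * rho_ball n x y.
Proof.
  intros HM. set (eta := ln (5/4) - M).
  set (a := Rmin (1/8) (eta/4)).
  assert (Ha0 : 0 < a) by (unfold a; apply Rmin_pos; unfold eta; lra).
  assert (Ha1 : a <= 1/8) by apply Rmin_l. assert (Ha2 : a <= eta/4) by apply Rmin_r.
  assert (Hb1 : a * 2^2 < 1) by nra.
  destruct (radial n hn a 2 Ha0 ltac:(lra) Hb1) as [Bx [By [Dxy [HS [HA0 HA]]]]].
  set (x := ve (1-a)) in *. set (y := ve (1 - a*2^2)) in *.
  exists x, y. split; [auto| split; [auto|]].
  set (A := Aval n x y) in *. set (S := Sval n x y) in *.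
  replace ((2^2-1)/2) with (3/2) in * by field.
  assert (HA1 : A <= 3/4 + 2*a).
  { apply Rle_trans with (3 / 2 / (2 - a * 2 ^ 2)); auto.
    apply Rmult_le_reg_r with (2 - a*2^2); [lra|]. unfold Rdiv.
    rewrite Rmult_assoc, Rinv_l by lra. nra. }
  assert (HE : Ef A <= 2 + 4*a).
  { unfold Ef. assert (sqrt (A^2+1) <= 5/4 + 2*a) by (apply sqrt_le_l; nra). lra. }
  assert (HE1 : 1 <= Ef A) by (apply Ef_ge1; lra).
  rewrite tau_eq, rho_eq. fold S A. fold (Ef A).
  assert (ln (5/2) <= ln (1+S)) by (apply ln_le'; lra).
  assert (ln (Ef A) <= ln (2 + 4*a)) by (apply ln_le'; lra).
  assert (ln (5/2) = ln (5/4) + ln 2) by (rewrite <- ln_mult by lra; f_equal; field).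
  assert (ln (2 + 4*a) = ln 2 + ln (1 + 2*a)) by (rewrite <- ln_mult by lra; f_equal; ring).
  assert (ln (1 + 2*a) <= 2*a) by (pose proof (ln_le_sub1 (1+2*a)); lra).
  unfold eta in *. lra.
Qed.
End Fam.

Lemma ineqs n x y : (1 <= n)%nat -> in_ball n x -> in_ball n y ->
     / 4 * rho_ball n x y <= tau_tilde_ball n x y /\
     tau_tilde_ball n x y <= rho_ball n x y /\
     tau_tilde_ball n x y <= / 2 * rho_ball n x y + ln (5 / 4).
Proof.
  intros hn Hx Hy. rewrite tau_eq, rho_eq. fold (Ef (Aval n x y)).
  pose proof (Sval_nonneg n x y hn Hx Hy). pose proof (Sval_le2A n x y hn Hx Hy).
  pose proof (Aval_nonneg n x y).
  destruct (upper_ineqs (Aval n x y) (Sval n x y)) as [U1 U2]; auto.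
  split; [|split; lra].
  destruct (Rle_lt_or_eq_dec 0 (edist n x y) (edist_nonneg n x y)) as [Hd|Hd].
  - assert (HE : Ef (Aval n x y) <= (1 + Sval n x y)^2).
    { destruct (Rle_or_lt (norm n y) (norm n x)).
      - apply lower_geom; auto.
      - rewrite <- (Aval_sym n x y), <- (Sval_sym n hn x y) by auto.
        apply lower_geom; auto. lra. rewrite edist_sym; auto. }
    pose proof (Ef_ge1 _ H1).
    assert (ln (Ef (Aval n x y)) <= ln ((1 + Sval n x y)^2)) by (apply ln_le'; lra).
    rewrite ln_pow in H3 by lra. simpl INR in H3. lra.
  - assert (HA : Aval n x y = 0) by (unfold Aval; rewrite <- Hd; unfold Rdiv; ring).
    rewrite HA. unfold Ef. replace (0^2+1) with 1 by ring. rewrite sqrt_1, Rplus_0_l, ln_1.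
    assert (0 <= ln (1 + Sval n x y)) by (rewrite <- ln_1; apply ln_le'; lra). lra.
Qed.

Theorem theorem4p1 (n : nat) (hn : (2 <= n)%nat) :
  (forall x y, in_ball n x -> in_ball n y ->
     / 4 * rho_ball n x y <= tau_tilde_ball n x y /\
     tau_tilde_ball n x y <= rho_ball n x y /\
     tau_tilde_ball n x y <= / 2 * rho_ball n x y + ln (5 / 4)) /\
  is_glb (fun r => exists x y, in_ball n x /\ in_ball n y /\ edist n x y <> 0 /\
            r = tau_tilde_ball n x y / rho_ball n x y) (/ 4) /\
  is_lub (fun r => exists x y, in_ball n x /\ in_ball n y /\ edist n x y <> 0 /\
            r = tau_tilde_ball n x y / rho_ball n x y) 1 /\
  is_lub (fun r => exists x y, in_ball n x /\ in_ball n y /\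
            r = tau_tilde_ball n x y - / 2 * rho_ball n x y) (ln (5 / 4)).
Proof.
  assert (hn1 : (1 <= n)%nat) by lia.
  split; [intros; apply ineqs; auto|].
  split; [split|split; split].
  - intros r [x [y [Hx [Hy [Hd ->]]]]].
    assert (0 < rho_ball n x y) by (apply rho_pos; auto; pose proof (edist_nonneg n x y); lra).
    destruct (ineqs n x y hn1 Hx Hy) as [I1 _].
    apply Rmult_le_reg_r with (rho_ball n x y); auto. unfold Rdiv.
    rewrite Rmult_assoc, Rinv_l by lra. lra.
  - intros b Hb. destruct (Rle_or_lt b (/4)) as [|Hlt]; auto. exfalso.
    destruct (fam_inf n hn1 b Hlt) as [x [y [Hx [Hy [Hd Hr]]]]].
    assert (b <= tau_tilde_ball n x y / rho_ball n x y) by (apply Hb; exists x, y; auto). lra.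
  - intros r [x [y [Hx [Hy [Hd ->]]]]].
    assert (0 < rho_ball n x y) by (apply rho_pos; auto; pose proof (edist_nonneg n x y); lra).
    destruct (ineqs n x y hn1 Hx Hy) as [_ [I2 _]].
    apply Rmult_le_reg_r with (rho_ball n x y); auto. unfold Rdiv.
    rewrite Rmult_assoc, Rinv_l by lra. lra.
  - intros b Hb. destruct (Rle_or_lt 1 b) as [|Hlt]; auto. exfalso.
    destruct (fam_ratio n hn1 b Hlt) as [x [y [Hx [Hy [Hd Hr]]]]].
    assert (tau_tilde_ball n x y / rho_ball n x y <= b) by (apply Hb; exists x, y; auto). lra.
  - intros r [x [y [Hx [Hy ->]]]].
    destruct (ineqs n x y hn1 Hx Hy) as [_ [_ I3]]. lra.
  - intros b Hb. destruct (Rle_or_lt (ln (5/4)) b) as [|Hlt]; auto. exfalso.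
    destruct (fam_diff n hn1 b Hlt) as [x [y [Hx [Hy Hr]]]].
    assert (tau_tilde_ball n x y - / 2 * rho_ball n x y <= b) by (apply Hb; exists x, y; auto). lra.
Qed.
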